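(* Let $T$ be Takagi's function on $[0,1]$, $T(x)=\sum_{n=1}^\infty 2^{-n}\phi^{(n)}(x)$, with $\phi(x)=2x$ on $[0,1/2]$, $\phi(x)=2-2x$ on $[1/2,1]$. Let $x\in(0,1)$ be non-dyadic, with binary expansion $x=\sum_{k\ge1}2^{-k}\varepsilon_k$, and write $x=\sum_{n\ge1}2^{-a_n}$, $1-x=\sum_{n\ge1}2^{-b_n}$ with $\{a_n\},\{b_n\}$ strictly increasing sequences of positive integers. Then the limit $$\lim_{h\to0}\frac{T(x+h)-T(x)}{h\log_2(1/|h|)}$$ exists if and only if $x$ is density-regular, in which case the limit equals $d_0(x)-d_1(x)$.
   Context: $d_1(x):=\lim_{n\to\infty}\frac1n\sum_{k=1}^n\varepsilon_k$ (when it exists) and $d_0(x):=1-d_1(x)$. The point $x$ is density-regular if $d_1(x)$ exists and one of the following holds: (a) $0<d_1(x)<1$; (b) $d_1(x)=0$ and $a_{n+1}/a_n\to1$; (c) $d_1(x)=1$ and $b_{n+1}/b_n\to1$. A dyadic point is one of the form $k/2^m$. *)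

(* Defs.v *)
From Stdlib Require Import Reals Lra.
From Coquelicot Require Import Coquelicot.
Open Scope R_scope.

(* Tent map phi(x) = 2x on [0,1/2], 2-2x on [1/2,1] (extended by the same
   formulas outside [0,1]; only values on [0,1] matter). *)
Definition phi (x : R) : R := if Rle_dec x (/2) then 2 * x else 2 - 2 * x.

Definition takagi (x : R) : R :=
  Series (fun n : nat => (/2) ^ (S n) * Nat.iter (S n) phi x).

Definition dyadic (x : R) : Prop :=
  exists k m : nat, x = INR k / 2 ^ m.

Definition binary_expansion (x : R) (eps : nat -> nat) : Prop :=
  (forall k, (1 <= k)%nat -> (eps k = 0 \/ eps k = 1)%nat) /\
  is_series (fun k : nat => INR (eps (S k)) / 2 ^ (S k)) x.

(* y = sum_{n>=1} 2^{-a_n}, with (a_n)_{n>=1} strictly increasing positive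
   integers; indexed here from 0: a 0, a 1, ... *)
Definition power_sum_repr (y : R) (a : nat -> nat) : Prop :=
  (0 < a 0)%nat /\ (forall n, (a n < a (S n))%nat) /\
  is_series (fun n : nat => / 2 ^ (a n)) y.

(* (1/n) sum_{k=1}^n eps_k, for n >= 1 (here index n corresponds to n+1 digits). *)
Definition digit_avg (eps : nat -> nat) (n : nat) : R :=
  sum_n (fun k => INR (eps (S k))) n / INR (S n).

Definition has_density1 (eps : nat -> nat) (d : R) : Prop :=
  is_lim_seq (digit_avg eps) d.

Definition density_regular_with (eps a b : nat -> nat) (d : R) : Prop :=
  has_density1 eps d /\
  ( (0 < d < 1)
  \/ (d = 0 /\ is_lim_seq (fun n => INR (a (S n)) / INR (a n)) 1)
  \/ (d = 1 /\ is_lim_seq (fun n => INR (b (S n)) / INR (b n)) 1) ).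

Definition density_regular (eps a b : nat -> nat) : Prop :=
  exists d, density_regular_with eps a b d.

Definition log2 (y : R) : R := ln y / ln 2.

Definition takagi_quot (x h : R) : R :=
  (takagi (x + h) - takagi x) / (h * log2 (/ Rabs h)).

(* Main.v *)
Require Import Defs.
From Stdlib Require Import Reals.
From Coquelicot Require Import Coquelicot.
Open Scope R_scope.
From Stdlib Require Import Lra Lia ZArith.


Definition psi (z:R) : R := Rmin (z - IZR (Int_part z)) (IZR (Int_part z) + 1 - z).

Lemma Int_part_bounds z : IZR (Int_part z) <= z < IZR (Int_part z) + 1.
Proof. destruct (base_Int_part z). lra. Qed.

Lemma psi_le z (k:Z) : psi z <= Rabs (z - IZR k).
Proof.
  unfold psi. pose proof (Int_part_bounds z) as [H1 H2].
  destruct (Z.le_gt_cases k (Int_part z)) as [Hk|Hk].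
  - apply IZR_le in Hk. eapply Rle_trans. apply Rmin_l.
    rewrite Rabs_right; lra.
  - assert (Hk' : (Int_part z + 1 <= k)%Z) by lia. apply IZR_le in Hk'.
    rewrite plus_IZR in Hk'. eapply Rle_trans. apply Rmin_r.
    rewrite Rabs_left1; lra.
Qed.

Lemma psi_attain z : exists k:Z, psi z = Rabs (z - IZR k).
Proof.
  unfold psi. pose proof (Int_part_bounds z) as [H1 H2].
  destruct (Rle_dec (z - IZR (Int_part z)) (IZR (Int_part z) + 1 - z)).
  - exists (Int_part z). rewrite Rmin_left by lra. rewrite Rabs_right; lra.
  - exists (Int_part z + 1)%Z. rewrite Rmin_right by lra. rewrite plus_IZR.
    rewrite Rabs_left1; lra.
Qed.

Lemma psi_nonneg z : 0 <= psi z.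
Proof. destruct (psi_attain z) as [k ->]. apply Rabs_pos. Qed.

Lemma psi_le_half z : psi z <= /2.
Proof.
  unfold psi. pose proof (Int_part_bounds z). apply Rmin_case_strong; intros; lra.
Qed.

Lemma psi_lip a b : Rabs (psi a - psi b) <= Rabs (a - b).
Proof.
  destruct (psi_attain a) as [ka Ha]. destruct (psi_attain b) as [kb Hb].
  pose proof (psi_le a kb). pose proof (psi_le b ka).
  assert (Rabs (a - IZR kb) <= Rabs (a - b) + Rabs (b - IZR kb)).
  { replace (a - IZR kb) with ((a-b) + (b - IZR kb)) by ring. apply Rabs_triang. }
  assert (Rabs (b - IZR ka) <= Rabs (a - b) + Rabs (a - IZR ka)).
  { replace (b - IZR ka) with (-(a-b) + (a - IZR ka)) by ring.
    eapply Rle_trans. apply Rabs_triang. rewrite Rabs_Ropp. lra. }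
  apply Rabs_le. lra.
Qed.

Lemma psi_opp z : psi (- z) = psi z.
Proof.
  apply Rle_antisym.
  - destruct (psi_attain z) as [k Hk]. rewrite Hk.
    replace (Rabs (z - IZR k)) with (Rabs (- z - IZR (- k))).
    apply psi_le. rewrite opp_IZR. rewrite <- Rabs_Ropp. f_equal; ring.
  - destruct (psi_attain (-z)) as [k Hk]. rewrite Hk.
    replace (Rabs (- z - IZR k)) with (Rabs (z - IZR (- k))).
    apply psi_le. rewrite opp_IZR. rewrite <- Rabs_Ropp. f_equal; ring.
Qed.

Lemma psi_shift z (m:Z) : psi (z + IZR m) = psi z.
Proof.
  apply Rle_antisym.
  - destruct (psi_attain z) as [k Hk]. rewrite Hk.
    replace (Rabs (z - IZR k)) with (Rabs (z + IZR m - IZR (k + m))).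
    apply psi_le. rewrite plus_IZR. f_equal; ring.
  - destruct (psi_attain (z + IZR m)) as [k Hk]. rewrite Hk.
    replace (Rabs (z + IZR m - IZR k)) with (Rabs (z - IZR (k - m))).
    apply psi_le. rewrite minus_IZR. f_equal; ring.
Qed.

Lemma psi_lin0 (K:Z) s : 0 <= s <= /2 -> psi (IZR K + s) = s.
Proof.
  intros Hs. apply Rle_antisym.
  - replace s with (Rabs (IZR K + s - IZR K)) at 2.
    apply psi_le. rewrite Rabs_right; lra.
  - destruct (psi_attain (IZR K + s)) as [k Hk]. rewrite Hk.
    destruct (Z.eq_dec k K) as [->|Hne].
    + rewrite Rabs_right; lra.
    + destruct (Z.le_gt_cases k (K-1)) as [H|H].
      * apply IZR_le in H. rewrite minus_IZR in H. rewrite Rabs_right; lra.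
      * assert (K+1 <= k)%Z by lia. assert (IZR (K+1) <= IZR k) by (apply IZR_le; lia).
        rewrite plus_IZR in H1. rewrite Rabs_left1; lra.
Qed.

Lemma psi_lin1 (K:Z) s : 0 <= s <= /2 -> psi (IZR K + /2 + s) = /2 - s.
Proof.
  intros Hs. replace (IZR K + /2 + s) with (- (IZR (-(K+1)) + (/2 - s))).
  rewrite psi_opp. apply psi_lin0. lra.
  rewrite opp_IZR, plus_IZR. simpl. lra.
Qed.


Lemma psi_double z : psi (2 * z) = psi (2 * psi z).
Proof.
  destruct (psi_attain z) as [k Hk]. rewrite Hk.
  destruct (Rle_dec 0 (z - IZR k)).
  - rewrite Rabs_right by lra.
    replace (2*z) with (2*(z - IZR k) + IZR (2*k)) by (rewrite mult_IZR; simpl; ring).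
    apply psi_shift.
  - rewrite Rabs_left by lra.
    replace (2*z) with (- (2*(-(z - IZR k))) + IZR (2*k)) by (rewrite mult_IZR; simpl; ring).
    rewrite psi_shift. apply psi_opp.
Qed.

Lemma phi_psi z : phi (2 * psi z) = 2 * psi (2 * z).
Proof.
  rewrite psi_double. pose proof (psi_nonneg z). pose proof (psi_le_half z).
  set (t := psi z) in *. unfold phi.
  destruct (Rle_dec (2*t) (/2)).
  - replace (2*t) with (IZR 0 + 2*t) at 2 by (change (IZR 0) with 0; ring).
    rewrite psi_lin0 by lra. ring.
  - assert (E: psi (2*t) = psi (IZR 0 + /2 + (2*t - /2))) by (replace (IZR 0 + /2 + (2*t - /2)) with (2*t) by (change (IZR 0) with 0; lra); reflexivity).
    rewrite E, psi_lin1 by lra. lra.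
Qed.

Lemma iter_phi n y : 0 <= y <= 1 -> Nat.iter (S n) phi y = 2 * psi (2^n * y).
Proof.
  intros Hy. induction n.
  - change (Nat.iter 1 phi y) with (phi y). rewrite pow_O. unfold phi. rewrite Rmult_1_l. destruct (Rle_dec y (/2)).
    + replace y with (IZR 0 + y) at 2 by (change (IZR 0) with 0; ring). rewrite psi_lin0 by lra. ring.
    + replace y with (IZR 0 + /2 + (y - /2)) at 2 by (change (IZR 0) with 0; ring). rewrite psi_lin1 by lra. lra.
  - change (Nat.iter (S (S n)) phi y) with (phi (Nat.iter (S n) phi y)).
    rewrite IHn, phi_psi. rewrite <- tech_pow_Rmult. f_equal. f_equal. ring.
Qed.

Fixpoint TS (K:nat) (y:R) : R :=
  match K with O => 0 | S K' => TS K' y + (/2)^K' * psi (2^K' * y) end.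

Lemma TS_sum K y : sum_n (fun n => (/2)^n * psi (2^n*y)) K = TS (S K) y.
Proof.
  induction K.
  - rewrite sum_O. simpl. ring.
  - rewrite sum_Sn, IHK. reflexivity.
Qed.

Lemma ex_series_T y : ex_series (fun n => (/2)^n * psi (2^n*y)).
Proof.
  apply (@ex_series_le R_AbsRing R_CompleteNormedModule _ (fun n => (/2)^n)).
  - intros n. change norm with Rabs. simpl. rewrite Rabs_right.
    pose proof (psi_le_half (2^n*y)). pose proof (psi_nonneg (2^n*y)).
    assert (0 < (/2)^n) by (apply pow_lt; lra). nra.
    apply Rle_ge, Rmult_le_pos. apply pow_le; lra. apply psi_nonneg.
  - apply ex_series_geom. rewrite Rabs_right; lra.
Qed.

Lemma takagi_eq y : 0 <= y <= 1 -> takagi y = Series (fun n => (/2)^n * psi (2^n*y)).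
Proof.
  intros Hy. unfold takagi. apply Series_ext. intros n.
  rewrite iter_phi by auto. rewrite <- tech_pow_Rmult. field.
Qed.

Lemma TS_lim y : 0 <= y <= 1 -> is_lim_seq (fun K => TS K y) (takagi y).
Proof.
  intros Hy. rewrite takagi_eq by auto.
  apply is_lim_seq_incr_1.
  pose proof (Series_correct _ (ex_series_T y)) as H.
  unfold is_series in H.
  eapply is_lim_seq_ext. 2: exact H.
  intros K. apply TS_sum.
Qed.

Lemma takagi_diff_bound x y c B K0 : 0 <= x <= 1 -> 0 <= y <= 1 ->
  (forall K, (K0 <= K)%nat -> Rabs (TS K y - TS K x - c) <= B) ->
  Rabs (takagi y - takagi x - c) <= B.
Proof.
  intros Hx Hy HB.
  assert (Hl : is_lim_seq (fun K => Rabs (TS K y - TS K x - c)) (Rabs (takagi y - takagi x - c))).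
  { apply (is_lim_seq_abs _ (Finite (takagi y - takagi x - c))).
    apply (is_lim_seq_minus' _ (fun _ => c)). apply is_lim_seq_minus'; apply TS_lim; auto.
    apply is_lim_seq_const. }
  assert (Hl' : is_lim_seq (fun K => Rabs (TS (K + K0) y - TS (K + K0) x - c)) (Rabs (takagi y - takagi x - c))).
  { apply (is_lim_seq_subseq (fun K => Rabs (TS K y - TS K x - c)) _ (fun K => (K + K0)%nat)). 2: exact Hl.
    intros P [N HN]. exists N. intros n Hn. apply HN. lia. }
  apply (is_lim_seq_le _ (fun _ => B) _ _ (fun K => HB _ (Nat.le_add_l K0 K)) Hl' (is_lim_seq_const B)).
Qed.


Definition mult (n:nat) (z:R) : Prop := exists M:nat, z = INR M / 2^n.

Lemma pow2_pos n : 0 < 2^n.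
Proof. apply pow_lt; lra. Qed.

Lemma pow2_le m n : (m <= n)%nat -> 2^m <= 2^n.
Proof. intros. apply Rle_pow; lra || auto. Qed.

Lemma pow2_add m n : 2^(m+n) = 2^m * 2^n.
Proof. apply pow_add. Qed.

Lemma mult_mono n n' z : (n <= n')%nat -> mult n z -> mult n' z.
Proof.
  intros H [M ->]. exists (M * 2^(n'-n))%nat.
  rewrite mult_INR, pow_INR. replace n' with (n + (n'-n))%nat at 2 by lia.
  rewrite pow2_add. simpl INR. replace (1+1) with 2 by ring.
  pose proof (pow2_pos n). pose proof (pow2_pos (n'-n)). field. lra.
Qed.

Lemma mult_0 n : mult n 0.
Proof. exists 0%nat. simpl. unfold Rdiv. ring. Qed.

Lemma mult_plus n z c p : (p <= n)%nat -> mult n z -> mult n (z + INR c / 2^p).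
Proof.
  intros Hp [M ->]. exists (M + c * 2^(n-p))%nat.
  rewrite plus_INR, mult_INR, pow_INR. simpl INR. replace (1+1) with 2 by ring.
  replace n with (p + (n-p))%nat at 1 3 by lia. rewrite pow2_add.
  pose proof (pow2_pos p). pose proof (pow2_pos (n-p)). field. lra.
Qed.

Lemma mult_unique n A A' z : mult n A -> mult n A' ->
  0 < z - A < / 2^n -> 0 < z - A' < / 2^n -> A = A'.
Proof.
  intros [M ->] [M' ->] H1 H2. pose proof (pow2_pos n).
  assert (INR M < INR M' + 1 /\ INR M' < INR M + 1) as [H3 H4].
  { split.
    - assert (INR M / 2^n < INR M' / 2^n + / 2^n) by lra.
      apply (Rmult_lt_compat_r (2^n)) in H0; auto.
      replace (INR M / 2^n * 2^n) with (INR M) in H0 by (field; lra).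
      replace ((INR M' / 2^n + / 2^n) * 2^n) with (INR M' + 1) in H0 by (field; lra). lra.
    - assert (INR M' / 2^n < INR M / 2^n + / 2^n) by lra.
      apply (Rmult_lt_compat_r (2^n)) in H0; auto.
      replace (INR M' / 2^n * 2^n) with (INR M') in H0 by (field; lra).
      replace ((INR M / 2^n + / 2^n) * 2^n) with (INR M + 1) in H0 by (field; lra). lra. }
  rewrite <- S_INR in H3, H4. apply INR_lt in H3. apply INR_lt in H4.
  assert (M = M') by lia. subst. reflexivity.
Qed.

Fixpoint Ssum (c p : nat -> nat) (k:nat) : R :=
  match k with O => 0 | S k' => Ssum c p k' + INR (c k') / 2^(p k') end.

Lemma Ssum_sum c p m : sum_n (fun j => INR (c j) / 2^(p j)) m = Ssum c p (S m).
Proof.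
  induction m.
  - rewrite sum_O. simpl. ring.
  - rewrite sum_Sn, IHm. reflexivity.
Qed.

Lemma p_mono (p : nat -> nat) : (forall n, (p n < p (S n))%nat) ->
  forall m n, (m < n)%nat -> (p m < p n)%nat.
Proof.
  intros Hp m n H. induction H. apply Hp. specialize (Hp m0). lia.
Qed.

Lemma p_mono_le (p : nat -> nat) : (forall n, (p n < p (S n))%nat) ->
  forall m n, (m <= n)%nat -> (p m <= p n)%nat.
Proof.
  intros Hp m n H. destruct (Nat.eq_dec m n). subst; lia.
  pose proof (p_mono p Hp m n). lia.
Qed.

Lemma Ssum_partial c p k : (forall j, (c j <= 1)%nat) -> (forall n, (p n < p (S n))%nat) ->
  forall i, 0 <= Ssum c p (k + i) - Ssum c p k <= 2 / 2^(p k) - 2 / 2^(p (k+i)%nat).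
Proof.
  intros Hc Hp i. induction i.
  - rewrite Nat.add_0_r. lra.
  - replace (k + S i)%nat with (S (k+i)) by lia. simpl Ssum.
    pose proof (Hc (k+i)%nat). apply le_INR in H. simpl INR in H.
    pose proof (pos_INR (c (k+i)%nat)).
    pose proof (Hp (k+i)%nat).
    assert (2 * 2^(p (k+i)%nat) <= 2^(p (S (k+i)))).
    { replace (2 * 2^(p (k+i)%nat)) with (2^(S (p (k+i)%nat))) by reflexivity.
      apply pow2_le. lia. }
    pose proof (pow2_pos (p (k+i)%nat)). pose proof (pow2_pos (p (S (k+i)))).
    assert (INR (c (k+i)%nat) / 2^(p (k+i)%nat) <= / 2^(p (k+i)%nat)).
    { unfold Rdiv. rewrite <- (Rmult_1_l (/ 2^(p (k+i)%nat))) at 2.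
      apply Rmult_le_compat_r. left; apply Rinv_0_lt_compat; lra. lra. }
    assert (0 <= INR (c (k+i)%nat) / 2^(p (k+i)%nat)).
    { apply Rdiv_le_0_compat; lra. }
    assert (2 / 2^(p (S (k+i))) <= / 2^(p (k+i)%nat)).
    { apply (Rmult_le_reg_r (2^(p (S (k+i))) * 2^(p (k+i)%nat))). nra.
      replace (2 / 2 ^ p (S (k + i)) * (2 ^ p (S (k + i)) * 2 ^ p (k + i)%nat)) with
        (2 * 2 ^ p (k + i)%nat) by (field; lra).
      replace (/ 2 ^ p (k + i)%nat * (2 ^ p (S (k + i)) * 2 ^ p (k + i)%nat)) with
        (2 ^ p (S (k + i))) by (field; lra). lra. }
    lra.
Qed.

Lemma Ssum_bounds c p z k : (forall j, (c j <= 1)%nat) -> (forall n, (p n < p (S n))%nat) ->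
  is_series (fun j => INR (c j) / 2^(p j)) z ->
  0 <= z - Ssum c p k <= 2 / 2^(p k).
Proof.
  intros Hc Hp Hs.
  assert (Hl : is_lim_seq (fun i => Ssum c p (S (k + i))) z).
  { apply (is_lim_seq_subseq (fun m => Ssum c p (S m)) _ (fun i => (k+i)%nat)).
    intros P [N HN]. exists N. intros n Hn. apply HN. lia.
    eapply is_lim_seq_ext. 2: exact Hs. intros m. apply Ssum_sum. }
  assert (Hl' : is_lim_seq (fun i => Ssum c p (k + S i)) z).
  { eapply is_lim_seq_ext. 2: exact Hl. intros i. rewrite Nat.add_succ_r. reflexivity. }
  split.
  - assert (Rbar_le (Ssum c p k) z).
    { apply (is_lim_seq_le (fun _ => Ssum c p k) (fun i => Ssum c p (k + S i))).
      intros i; cbv beta; pose proof (Ssum_partial c p k Hc Hp (S i)). lra.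
      apply is_lim_seq_const. exact Hl'. }
    simpl in H. lra.
  - assert (Rbar_le z (Ssum c p k + 2 / 2^(p k))).
    { apply (is_lim_seq_le (fun i => Ssum c p (k + S i)) (fun _ => Ssum c p k + 2 / 2^(p k))).
      intros i; cbv beta; pose proof (Ssum_partial c p k Hc Hp (S i)).
      pose proof (pow2_pos (p (k + S i)%nat)).
      assert (0 <= 2 / 2 ^ p (k + S i)%nat) by (apply Rdiv_le_0_compat; lra). lra.
      exact Hl'. apply is_lim_seq_const. }
    simpl in H. lra.
Qed.

Lemma Ssum_mult c p k n : (forall j, (j < k)%nat -> (p j <= n)%nat) -> mult n (Ssum c p k).
Proof.
  induction k; intros H.
  - apply mult_0.
  - simpl. apply mult_plus. apply H. lia. apply IHk. intros. apply H. lia.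
Qed.

Lemma Ssum_strict c p z k : (forall j, (c j <= 1)%nat) -> (forall n, (p n < p (S n))%nat) ->
  is_series (fun j => INR (c j) / 2^(p j)) z -> ~ dyadic z ->
  0 < z - Ssum c p k < 2 / 2^(p k).
Proof.
  intros Hc Hp Hs Hd. pose proof (Ssum_bounds c p z k Hc Hp Hs).
  assert (Hm : mult (p k) (Ssum c p k)).
  { apply Ssum_mult. intros j Hj. pose proof (p_mono p Hp j k Hj). lia. }
  destruct Hm as [M HM].
  split.
  - destruct (Req_dec z (Ssum c p k)). exfalso. apply Hd. exists M, (p k). lra. lra.
  - destruct (Req_dec z (Ssum c p k + 2 / 2^(p k))). exfalso. apply Hd. exists (M+2)%nat, (p k).
    rewrite H0, HM, plus_INR. simpl INR. unfold Rdiv. ring. lra.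
Qed.


Definition Hyp x eps a b := 0 < x < 1 /\ ~ dyadic x /\ binary_expansion x eps /\
  power_sum_repr x a /\ power_sum_repr (1 - x) b.

Definition refl (eps : nat -> nat) := fun k => (1 - eps k)%nat.

Lemma half_series : is_series (fun k => / 2^(S k)) 1.
Proof.
  pose proof (is_series_geom (/2)) as H. rewrite Rabs_right in H by lra.
  specialize (H ltac:(lra)).
  pose proof (is_series_scal (/2) _ _ H) as H2.
  assert (E : (scal (/2) (/ (1 - /2)) : R) = 1) by (change scal with Rmult; simpl; field).
  rewrite <- E.
  eapply is_series_ext. 2: exact H2. intros n. change scal with Rmult. simpl.
  rewrite Rinv_mult. rewrite pow_inv. reflexivity.
Qed.

Lemma nondyadic_refl x : 0 < x < 1 -> ~ dyadic x -> ~ dyadic (1 - x).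
Proof.
  intros Hx Hd [k [m Hk]]. apply Hd.
  assert (INR k < INR (2^m)).
  { rewrite pow_INR. simpl INR. replace (1+1) with 2 by ring.
    pose proof (pow2_pos m).
    apply (Rmult_lt_reg_r (/ 2^m)). apply Rinv_0_lt_compat; lra.
    rewrite Rinv_r by lra. unfold Rdiv in Hk. lra. }
  apply INR_lt in H. exists (2^m - k)%nat, m.
  rewrite minus_INR by lia. rewrite pow_INR. simpl INR. replace (1+1) with 2 by ring.
  pose proof (pow2_pos m). unfold Rdiv in *. field_simplify. 2: lra.
  replace x with (1 - (1-x)) by ring. rewrite Hk. field. lra.
Qed.

Lemma Hyp_refl x eps a b : Hyp x eps a b -> Hyp (1 - x) (refl eps) b a.
Proof.
  intros (Hx & Hd & [He Hs] & Ha & Hb).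
  split; [lra|]. split; [apply nondyadic_refl; auto|]. split; [|split].
  - split.
    + intros k Hk. unfold refl. destruct (He k Hk); lia.
    + pose proof (is_series_minus _ _ _ _ half_series Hs) as H.
      eapply is_series_ext. 2: exact H. intros n. change (plus ?u (opp ?v)) with (u - v).
      unfold refl. destruct (He (S n) ltac:(lia)) as [E|E]; rewrite E; simpl; field;
      apply pow_nonzero; lra.
  - exact Hb.
  - replace (1 - (1 - x)) with x by ring. exact Ha.
Qed.

Section S.
Variables (x : R) (eps a b : nat -> nat).
Hypothesis H : Hyp x eps a b.

Definition L (eps : nat -> nat) k := Ssum (fun j => eps (S j)) S k.

Lemma eps_le1 k : (1 <= k)%nat -> (eps k <= 1)%nat.
Proof. destruct H as (_ & _ & [He _] & _). intros Hk. destruct (He k Hk); lia. Qed.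

Lemma L_bounds k : 0 < x - L eps k < / 2^k.
Proof.
  destruct H as (Hx & Hd & [He Hs] & _).
  pose proof (Ssum_strict (fun j => eps (S j)) S x k) as Hb.
  replace (2 / 2^(S k)) with (/ 2^k) in Hb.
  apply Hb; auto. intros j. apply eps_le1. lia.
  simpl. field. apply pow_nonzero; lra.
Qed.

Lemma L_mult k n : (k <= n)%nat -> mult n (L eps k).
Proof. intros Hk. apply Ssum_mult. intros j Hj. lia. Qed.

Lemma L_S k : L eps (S k) = L eps k + INR (eps (S k)) / 2^(S k).
Proof. reflexivity. Qed.

End S.


Lemma inv_pow2_le m n : (m <= n)%nat -> / 2^n <= / 2^m.
Proof. intros. apply Rinv_le_contravar. apply pow2_pos. apply pow2_le; auto. Qed.

Lemma two_inv_pow2 m : 2 / 2^(S m) = / 2^m.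
Proof. simpl. field. apply pow_nonzero. lra. Qed.

Section S.
Variables (x : R) (eps a b : nat -> nat).
Hypothesis H : Hyp x eps a b.

Lemma b_incr n : (b n < b (S n))%nat.
Proof. destruct H as (_ & _ & _ & _ & (_ & Hb & _)). apply Hb. Qed.

Lemma b_pos : (0 < b 0)%nat.
Proof. destruct H as (_ & _ & _ & _ & (Hb & _ & _)). apply Hb. Qed.

Lemma b_ge n : (S n <= b n)%nat.
Proof. induction n. apply b_pos. pose proof (b_incr n). lia. Qed.

Definition Sb k := Ssum (fun _ => 1%nat) b k.

Lemma Sb_strict k : 0 < (1 - x) - Sb k < 2 / 2^(b k).
Proof.
  destruct H as (Hx & Hd & _ & _ & (Hb0 & Hb & Hs)).
  apply Ssum_strict.
  - intros; lia.
  - exact Hb.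
  - eapply is_series_ext. 2: exact Hs. intros n. simpl. unfold Rdiv. ring.
  - apply nondyadic_refl; auto.
Qed.

Lemma Sb_mult k n : (forall j, (j < k)%nat -> (b j <= n)%nat) -> mult n (Sb k).
Proof. apply Ssum_mult. Qed.

Lemma L'_eq n A : mult n A -> 0 < (1-x) - A < / 2^n -> L (refl eps) n = A.
Proof.
  intros HA HB. apply (mult_unique n _ _ (1-x)). apply L_mult; auto.
  auto. apply (L_bounds (1-x) (refl eps) b a). apply Hyp_refl. auto. auto.
Qed.

Lemma refl_digit n : INR (refl eps (S n)) = 2^(S n) * (L (refl eps) (S n) - L (refl eps) n).
Proof. rewrite L_S. field. apply pow_nonzero. lra. Qed.

Lemma eps_b k : eps (b k) = 0%nat.
Proof.
  pose proof (b_ge k) as Hbk. destruct (b k) as [|n] eqn:E. lia.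
  assert (E1 : L (refl eps) (S n) = Sb (S k)).
  { apply L'_eq. apply Sb_mult. intros j Hj. rewrite <- E. apply (p_mono_le b b_incr). lia.
    pose proof (Sb_strict (S k)). pose proof (b_incr k).
    pose proof (inv_pow2_le (S (b k)) (b (S k)) ltac:(lia)). rewrite <- two_inv_pow2 in H2.
    pose proof (pow2_pos (S (b (S k)))). rewrite <- E.
    assert (2 / 2 ^ b (S k) <= /2^(b k)).
    { rewrite <- (two_inv_pow2 (b k)). unfold Rdiv. apply Rmult_le_compat_l. lra.
      apply inv_pow2_le. lia. }
    lra. }
  assert (E2 : L (refl eps) n = Sb k).
  { apply L'_eq. apply Sb_mult. intros j Hj. pose proof (p_mono b b_incr j k Hj). lia.
    pose proof (Sb_strict k). rewrite E, two_inv_pow2 in H0. auto. }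
  pose proof (refl_digit n). rewrite E1, E2 in H0.
  assert (ES : Sb (S k) = Sb k + INR 1 / 2^(b k)) by reflexivity. rewrite ES, E in H0.
  replace (2 ^ S n * (Sb k + INR 1 / 2 ^ S n - Sb k)) with 1 in H0.
  2:{ simpl INR. field. apply pow_nonzero; lra. }
  unfold refl in H0. replace 1 with (INR 1) in H0 by reflexivity. apply INR_eq in H0. lia.
Qed.

Lemma eps_between k i : (b k < i < b (S k))%nat -> eps i = 1%nat.
Proof.
  intros Hi. destruct i as [|n]. lia.
  assert (Hs : 0 < (1 - x) - Sb (S k) < / 2^(S n)).
  { pose proof (Sb_strict (S k)).
    assert (2 / 2 ^ b (S k) <= /2^(S n)).
    { replace (b (S k)) with (S (b (S k) - 1)) by lia. rewrite two_inv_pow2.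
      apply inv_pow2_le. lia. }
    lra. }
  assert (E1 : L (refl eps) (S n) = Sb (S k)).
  { apply L'_eq. apply Sb_mult. intros j Hj. pose proof (p_mono_le b b_incr j k ltac:(lia)). lia. auto. }
  assert (E2 : L (refl eps) n = Sb (S k)).
  { apply L'_eq. apply Sb_mult. intros j Hj. pose proof (p_mono_le b b_incr j k ltac:(lia)). lia.
    pose proof (inv_pow2_le n (S n) ltac:(lia)). lra. }
  pose proof (refl_digit n). rewrite E1, E2 in H0.
  replace (2 ^ S n * (Sb (S k) - Sb (S k))) with (INR 0) in H0 by (simpl; ring).
  apply INR_eq in H0. unfold refl in H0. pose proof (eps_le1 x eps a b H (S n) ltac:(lia)). lia.
Qed.

End S.


Fixpoint Dsum (eps : nat -> nat) (k:nat) : R :=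
  match k with O => 0 | S k' => Dsum eps k' + (1 - 2 * INR (eps k)) end.

Lemma pow_half_mul n : (/2)^n * 2^n = 1.
Proof. rewrite <- Rpow_mult_distr. replace (/2*2) with 1 by field. apply pow1. Qed.

Lemma TS_phaseB x y N i :
  Rabs (TS (N+i) y - TS (N+i) x - (TS N y - TS N x)) <= /2^N - /2^(N+i).
Proof.
  induction i.
  - rewrite Nat.add_0_r. replace (TS N y - TS N x - (TS N y - TS N x)) with 0 by ring.
    rewrite Rabs_R0. lra.
  - replace (N + S i)%nat with (S (N+i)) by lia. simpl TS.
    set (K := (N+i)%nat) in *.
    assert (Rabs ((/2)^K * psi (2^K*y) - (/2)^K * psi (2^K*x)) <= (/2)^K * /2).
    { rewrite <- Rmult_minus_distr_l. rewrite Rabs_mult. rewrite Rabs_right.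
      2: apply Rle_ge, pow_le; lra. apply Rmult_le_compat_l. apply pow_le; lra.
      pose proof (psi_nonneg (2^K*y)). pose proof (psi_nonneg (2^K*x)).
      pose proof (psi_le_half (2^K*y)). pose proof (psi_le_half (2^K*x)).
      apply Rabs_le. lra. }
    rewrite pow_inv in H.
    assert (/2^K * /2 = /2^K - /2^(S K)) by (simpl; field; apply pow_nonzero; lra).
    rewrite H0 in H.
    pose proof (Rplus_le_compat _ _ _ _ IHi H) as H1.
    eapply Rle_trans. 2: (eapply Rle_trans; [exact H1| right; ring]).
    eapply Rle_trans. 2: apply Rabs_triang. right. f_equal. rewrite <- pow_inv. ring.
Qed.

Lemma TS_phaseA x y J c i :
  Rabs (TS J y - TS J x - c) <= 0 ->
  Rabs (TS (J+i) y - TS (J+i) x - c) <= INR i * Rabs (y - x).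
Proof.
  intros H0. induction i.
  - rewrite Nat.add_0_r. simpl INR. lra.
  - replace (J + S i)%nat with (S (J+i)) by lia. simpl TS. set (K := (J+i)%nat) in *.
    assert (Rabs ((/2)^K * psi (2^K*y) - (/2)^K * psi (2^K*x)) <= Rabs (y - x)).
    { rewrite <- Rmult_minus_distr_l. rewrite Rabs_mult. rewrite (Rabs_right ((/2)^K)).
      2: apply Rle_ge, pow_le; lra.
      eapply Rle_trans. apply Rmult_le_compat_l. apply pow_le; lra. apply psi_lip.
      rewrite <- Rmult_minus_distr_l, Rabs_mult, Rabs_right. 2: apply Rle_ge, pow_le; lra.
      rewrite <- Rmult_assoc, pow_half_mul. lra. }
    rewrite S_INR.
    replace (TS K y + (/ 2) ^ K * psi (2 ^ K * y) - (TS K x + (/ 2) ^ K * psi (2 ^ K * x)) - c)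
      with ((TS K y - TS K x - c) + ((/ 2) ^ K * psi (2 ^ K * y) - (/ 2) ^ K * psi (2 ^ K * x))) by ring.
    eapply Rle_trans. apply Rabs_triang. lra.
Qed.

Section S.
Variables (x : R) (eps a b : nat -> nat).
Hypothesis H : Hyp x eps a b.

Lemma eps01 k : (1 <= k)%nat -> eps k = 0%nat \/ eps k = 1%nat.
Proof. destruct H as (_ & _ & [He _] & _). apply He. Qed.

Lemma L_nest m i : L eps m <= L eps (m+i) /\ L eps (m+i) + /2^(m+i) <= L eps m + /2^m.
Proof.
  induction i.
  - rewrite Nat.add_0_r. lra.
  - replace (m + S i)%nat with (S (m+i)) by lia. rewrite L_S.
    pose proof (pow2_pos (S (m+i))).
    assert (/2^(S (m+i)) * 2 = /2^(m+i)) by (simpl; field; apply pow_nonzero; lra).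
    destruct (eps01 (S (m+i)) ltac:(lia)) as [E|E]; rewrite E; simpl INR; unfold Rdiv.
    + assert (0 < /2^(S (m+i))) by (apply Rinv_0_lt_compat; lra). lra.
    + assert (0 < /2^(S (m+i))) by (apply Rinv_0_lt_compat; lra). lra.
Qed.

Lemma L_nest' m J : (m <= J)%nat -> L eps m <= L eps J /\ L eps J + /2^J <= L eps m + /2^m.
Proof. intros. replace J with (m + (J-m))%nat by lia. apply L_nest. Qed.

Lemma L0 : L eps 0 = 0.
Proof. reflexivity. Qed.

Definition inlev J y := L eps J <= y <= L eps J + /2^J.

Lemma inlev_01 J y : inlev J y -> 0 <= y <= 1.
Proof.
  intros [H1 H2]. destruct (L_nest' 0 J ltac:(lia)). rewrite L0 in *. simpl in H3. lra.
Qed.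

Lemma inlev_mono m J y : (m <= J)%nat -> inlev J y -> inlev m y.
Proof. intros Hm [H1 H2]. destruct (L_nest' m J Hm). split; lra. Qed.

Lemma x_inlev J : inlev J x.
Proof. pose proof (L_bounds x eps a b H J). split; lra. Qed.

Lemma L_int n : exists M:nat, L eps n = INR M / 2^n.
Proof. apply L_mult. lia. Qed.

Lemma psi_eval n z : inlev (S n) z ->
  psi (2^n * z) = if Nat.eq_dec (eps (S n)) 0 then 2^n * (z - L eps (S n))
                  else /2 - 2^n * (z - L eps (S n)).
Proof.
  intros [H1 H2]. destruct (L_int n) as [M HM].
  pose proof (pow2_pos n).
  assert (Hs : 0 <= 2^n * (z - L eps (S n)) <= /2).
  { split. apply Rmult_le_pos; lra.
    assert (2^n * /2^(S n) = /2) by (simpl; field; lra).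
    rewrite <- H3. apply Rmult_le_compat_l; lra. }
  assert (E : 2^n * z = IZR (Z.of_nat M) + INR (eps (S n)) / 2 + 2^n * (z - L eps (S n))).
  { rewrite <- INR_IZR_INZ. rewrite L_S, HM. simpl pow. field. lra. }
  rewrite E. destruct (Nat.eq_dec (eps (S n)) 0) as [E0|E0].
  - rewrite E0. simpl INR. replace (IZR (Z.of_nat M) + 0 / 2 + 2 ^ n * (z - L eps (S n)))
      with (IZR (Z.of_nat M) + 2 ^ n * (z - L eps (S n))) by (unfold Rdiv; ring).
    apply psi_lin0. auto.
  - destruct (eps01 (S n) ltac:(lia)) as [E1|E1]. contradiction. rewrite E1. simpl INR.
    replace (1/2) with (/2) by field. apply psi_lin1. auto.
Qed.

Lemma psi_lin n J y : (n < J)%nat -> inlev J y ->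
  psi (2^n * y) - psi (2^n * x) = (1 - 2 * INR (eps (S n))) * 2^n * (y - x).
Proof.
  intros Hn Hy. assert (Hy' : inlev (S n) y) by (apply (inlev_mono _ J); auto).
  assert (Hx' : inlev (S n) x) by apply x_inlev.
  rewrite (psi_eval n y Hy'), (psi_eval n x Hx').
  destruct (Nat.eq_dec (eps (S n)) 0) as [E0|E0].
  - rewrite E0. simpl INR. ring.
  - destruct (eps01 (S n) ltac:(lia)) as [E1|E1]. contradiction. rewrite E1. simpl INR. ring.
Qed.

Lemma TS_lin J y K : inlev J y -> (K <= J)%nat -> TS K y - TS K x = (y - x) * Dsum eps K.
Proof.
  intros Hy. induction K; intros HK.
  - simpl. ring.
  - simpl TS. simpl Dsum.
    replace (TS K y + (/ 2) ^ K * psi (2 ^ K * y) - (TS K x + (/ 2) ^ K * psi (2 ^ K * x)))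
      with ((TS K y - TS K x) + (/2)^K * (psi (2 ^ K * y) - psi (2 ^ K * x))) by ring.
    rewrite IHK by lia. rewrite (psi_lin K J y) by (auto; lia).
    replace ((/ 2) ^ K * ((1 - 2 * INR (eps (S K))) * 2 ^ K * (y - x))) with
      (((/ 2) ^ K * 2^K) * ((1 - 2 * INR (eps (S K))) * (y - x))) by ring.
    rewrite pow_half_mul. ring.
Qed.

Lemma main_bound J N y : inlev J y -> (J <= N)%nat ->
  Rabs (takagi y - takagi x - (y - x) * Dsum eps J) <= INR (N - J) * Rabs (y - x) + / 2^N.
Proof.
  intros Hy HJN.
  apply (takagi_diff_bound x y _ _ N). apply (inlev_01 J), x_inlev. apply (inlev_01 J y Hy).
  intros K HK.
  assert (A : Rabs (TS N y - TS N x - (y - x) * Dsum eps J) <= INR (N-J) * Rabs (y - x)).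
  { replace N with (J + (N-J))%nat at 1 2 by lia. apply TS_phaseA.
    rewrite TS_lin with (J:=J) by (auto; lia).
    replace ((y - x) * Dsum eps J - (y - x) * Dsum eps J) with 0 by ring. rewrite Rabs_R0. lra. }
  pose proof (TS_phaseB x y N (K - N)) as B. replace (N + (K-N))%nat with K in B by lia.
  assert (0 < / 2^K) by (apply Rinv_0_lt_compat, pow2_pos).
  replace (TS K y - TS K x - (y - x) * Dsum eps J) with
    ((TS K y - TS K x - (TS N y - TS N x)) + (TS N y - TS N x - (y - x) * Dsum eps J)) by ring.
  eapply Rle_trans. apply Rabs_triang. lra.
Qed.

Lemma exact_diff J y : inlev J y -> (forall n, (J <= n)%nat -> psi (2^n*y) = psi (2^n*x)) ->
  takagi y - takagi x = (y - x) * Dsum eps J.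
Proof.
  intros Hy Hn.
  assert (Rabs (takagi y - takagi x - (y - x) * Dsum eps J) <= 0).
  { apply (takagi_diff_bound x y _ _ J). apply (inlev_01 J), x_inlev. apply (inlev_01 J y Hy).
    intros K HK. replace K with (J + (K-J))%nat by lia. induction (K - J)%nat.
    - rewrite Nat.add_0_r, TS_lin with (J:=J) by (auto; lia).
      replace ((y - x) * Dsum eps J - (y - x) * Dsum eps J) with 0 by ring. rewrite Rabs_R0. lra.
    - replace (J + S n)%nat with (S (J + n)) by lia. simpl TS. rewrite Hn by lia.
      replace (TS (J + n) y + (/ 2) ^ (J + n) * psi (2 ^ (J + n) * x) -
        (TS (J + n) x + (/ 2) ^ (J + n) * psi (2 ^ (J + n) * x)) - (y - x) * Dsum eps J)
      with (TS (J + n) y - TS (J + n) x - (y - x) * Dsum eps J) by ring. auto. }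
  pose proof (Rabs_pos (takagi y - takagi x - (y - x) * Dsum eps J)).
  assert (Rabs (takagi y - takagi x - (y - x) * Dsum eps J) = 0) by lra.
  apply Rabs_eq_0 in H2. lra.
Qed.

End S.


Lemma lim_eps f (L:R) : is_lim f 0 L <-> (forall e, 0 < e -> exists d, 0 < d /\ forall h, Rabs h < d -> h <> 0 -> Rabs (f h - L) < e).
Proof.
rewrite <- is_lim_spec. simpl. unfold locally', within, locally, ball. simpl. unfold AbsRing_ball, abs, minus, plus, opp. simpl.
split.
- intros H e He. destruct (H (mkposreal e He)) as [[d Hd] Hd']. exists d. split. auto.
  intros h Hh Hn. apply Hd'. simpl. rewrite Ropp_0, Rplus_0_r. auto. auto.
- intros H [e He]. destruct (H e He) as [d [Hd Hd']]. exists (mkposreal d Hd). simpl.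
  intros h Hh Hn. apply Hd'. rewrite Ropp_0, Rplus_0_r in Hh. auto. auto.
Qed.

Lemma ln2_pos : 0 < ln 2.
Proof. rewrite <- ln_1. apply ln_increasing; lra. Qed.

Lemma log2_pow m : log2 (2^m) = INR m.
Proof. unfold log2. rewrite ln_pow by lra. field. pose proof ln2_pos. lra. Qed.

Lemma log2_le_mono u v : 0 < u -> u <= v -> log2 u <= log2 v.
Proof.
  intros. unfold log2. unfold Rdiv. apply Rmult_le_compat_r.
  left. apply Rinv_0_lt_compat, ln2_pos. apply ln_le; auto.
Qed.

Lemma log2_lt_mono u v : 0 < u -> u < v -> log2 u < log2 v.
Proof.
  intros. unfold log2. unfold Rdiv. apply Rmult_lt_compat_r.
  apply Rinv_0_lt_compat, ln2_pos. apply ln_increasing; auto.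
Qed.

Lemma inv_le_inv_pow t m : 0 < t -> t <= / 2^m -> 2^m <= / t.
Proof.
  intros. pose proof (pow2_pos m). rewrite <- (Rinv_inv (2^m)).
  apply Rinv_le_contravar; auto.
Qed.

Lemma log2_a t m : 0 < t -> t <= / 2^m -> INR m <= log2 (/ t).
Proof.
  intros. rewrite <- log2_pow. apply log2_le_mono. apply pow2_pos. apply inv_le_inv_pow; auto.
Qed.

Lemma log2_b t m : 0 < t -> t < / 2^m -> INR m < log2 (/ t).
Proof.
  intros. rewrite <- log2_pow. apply log2_lt_mono. apply pow2_pos.
  pose proof (pow2_pos m). rewrite <- (Rinv_inv (2^m)). apply Rinv_lt_contravar; auto.
  apply Rmult_lt_0_compat; auto. apply Rinv_0_lt_compat; auto.
Qed.

Lemma log2_c t k : / 2^k <= t -> log2 (/ t) <= INR k.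
Proof.
  intros. pose proof (pow2_pos k). assert (0 < /2^k) by (apply Rinv_0_lt_compat; auto).
  rewrite <- log2_pow. apply log2_le_mono. apply Rinv_0_lt_compat; lra.
  rewrite <- (Rinv_inv (2^k)). apply Rinv_le_contravar; auto.
Qed.

Lemma log2_d t k : / 2^k < t -> log2 (/ t) < INR k.
Proof.
  intros. pose proof (pow2_pos k). assert (0 < /2^k) by (apply Rinv_0_lt_compat; auto).
  rewrite <- log2_pow. apply log2_lt_mono. apply Rinv_0_lt_compat; lra.
  rewrite <- (Rinv_inv (2^k)). apply Rinv_lt_contravar; auto. nra.
Qed.

Lemma Qbound x h D (J B e : R) :
  h <> 0 -> 0 < J -> J <= log2 (/ Rabs h) <= J + e -> 0 <= e -> Rabs D <= J ->
  Rabs (takagi (x + h) - takagi x - h * D) <= B * Rabs h ->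
  Rabs (takagi_quot x h - D / J) <= (B + e) / J.
Proof.
  intros Hh HJ [Hl1 Hl2] He HD HB. unfold takagi_quot.
  set (l := log2 (/ Rabs h)) in *. set (T := takagi (x+h) - takagi x) in *.
  assert (Hl : 0 < l) by lra.
  assert (Ha : 0 < Rabs h) by (apply Rabs_pos_lt; auto).
  assert (E : T / (h * l) - D / J = (T - h * D) / (h * l) + D * (J - l) / (l * J)).
  { field. repeat split; lra. }
  rewrite E. eapply Rle_trans. apply Rabs_triang.
  assert (Rabs ((T - h * D) / (h * l)) <= B / J).
  { unfold Rdiv. rewrite Rabs_mult, Rabs_inv, Rabs_mult, (Rabs_right l) by lra.
    assert (0 <= B). { pose proof (Rabs_pos (T - h*D)). nra. }
    rewrite Rinv_mult.
    apply Rle_trans with (B * Rabs h * (/ Rabs h * / l)).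
    apply Rmult_le_compat_r; auto. apply Rmult_le_pos; left; apply Rinv_0_lt_compat; lra.
    replace (B * Rabs h * (/ Rabs h * / l)) with (B * / l) by (field; lra).
    apply Rmult_le_compat_l; auto. apply Rinv_le_contravar; lra. }
  assert (Rabs (D * (J - l) / (l * J)) <= e / J).
  { unfold Rdiv. rewrite Rabs_mult, Rabs_inv, Rabs_mult, Rabs_mult, (Rabs_right l) by lra.
    rewrite (Rabs_right J) by lra. rewrite Rabs_minus_sym, (Rabs_right (l - J)) by lra.
    rewrite Rinv_mult.
    apply Rle_trans with (J * e * (/ l * / J)).
    apply Rmult_le_compat_r. apply Rmult_le_pos; left; apply Rinv_0_lt_compat; lra.
    apply Rmult_le_compat; try lra. apply Rabs_pos.
    replace (J * e * (/ l * / J)) with (e * / l) by (field; lra).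
    apply Rmult_le_compat_l; auto. apply Rinv_le_contravar; lra. }
  unfold Rdiv in *. lra.
Qed.

Lemma Dsum_abs eps k : (forall i, (1 <= i)%nat -> (eps i <= 1)%nat) -> Rabs (Dsum eps k) <= INR k.
Proof.
  intros He. induction k.
  - simpl. rewrite Rabs_R0. lra.
  - simpl Dsum. rewrite S_INR. pose proof (He (S k) ltac:(lia)).
    assert (Rabs (1 - 2 * INR (eps (S k))) = 1).
    { assert (eps (S k) = 0%nat \/ eps (S k) = 1%nat) as [E|E] by lia; rewrite E; simpl INR.
      rewrite Rabs_right; lra. rewrite Rabs_left; lra. }
    pose proof (Rabs_triang (Dsum eps k) (1 - 2 * INR (eps (S k)))). lra.
Qed.

Lemma Dsum_refl eps k : (forall i, (1 <= i)%nat -> (eps i <= 1)%nat) ->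
  Dsum (refl eps) k = - Dsum eps k.
Proof.
  intros He. induction k.
  - simpl. ring.
  - simpl Dsum. rewrite IHk. unfold refl. pose proof (He (S k) ltac:(lia)).
    rewrite minus_INR by lia. simpl INR. ring.
Qed.

Lemma sum_avg eps n : sum_n (fun k => INR (eps (S k))) n = (INR (S n) - Dsum eps (S n)) / 2.
Proof.
  induction n.
  - rewrite sum_O. simpl. field.
  - rewrite sum_Sn, IHn. change plus with Rplus. simpl Dsum. rewrite !S_INR. simpl Dsum. match goal with |- ?u = ?v => change (@eq R u v) end. field.
Qed.

Lemma digit_avg_D eps n : digit_avg eps n = (1 - Dsum eps (S n) / INR (S n)) / 2.
Proof.
  unfold digit_avg. rewrite sum_avg. field. pose proof (pos_INR n). rewrite S_INR. lra.
Qed.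

Definition DA eps m := Dsum eps m / INR m.

Lemma dens_to_DA eps d : has_density1 eps d -> is_lim_seq (DA eps) (1 - 2 * d).
Proof.
  intros Hd. apply is_lim_seq_incr_1.
  unfold has_density1 in Hd.
  assert (is_lim_seq (fun n => 1 - 2 * digit_avg eps n) (1 - 2*d)).
  { apply (is_lim_seq_minus' (fun _ => 1)). apply is_lim_seq_const.
    apply (is_lim_seq_scal_l _ 2 d) in Hd. exact Hd. }
  eapply is_lim_seq_ext. 2: exact H. intros n. cbv beta. rewrite digit_avg_D. unfold DA. field.
  rewrite S_INR. pose proof (pos_INR n). lra.
Qed.

Lemma DA_to_dens eps (L:R) : is_lim_seq (DA eps) L -> has_density1 eps ((1 - L)/2).
Proof.
  intros HL. apply is_lim_seq_incr_1 in HL. unfold has_density1.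
  assert (is_lim_seq (fun n => (1 - DA eps (S n)) / 2) ((1 - L)/2)).
  { apply (is_lim_seq_scal_r _ (/2) (1 - L)).
    apply (is_lim_seq_minus' (fun _ => 1)). apply is_lim_seq_const. exact HL. }
  eapply is_lim_seq_ext. 2: exact H. intros n. cbv beta. rewrite digit_avg_D. reflexivity.
Qed.

Lemma takagi_sym y : 0 <= y <= 1 -> takagi (1 - y) = takagi y.
Proof.
  intros Hy. rewrite !takagi_eq by lra. apply Series_ext. intros n. f_equal.
  replace (2^n * (1 - y)) with (- (2^n * y) + IZR (Z.of_nat (2^n))).
  rewrite psi_shift, psi_opp. reflexivity.
  rewrite <- INR_IZR_INZ, pow_INR. simpl INR. replace (1+1) with 2 by ring. ring.
Qed.

Lemma quot_refl x h : 0 < x < 1 -> 0 < h < x -> takagi_quot (1 - x) h = - takagi_quot x (- h).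
Proof.
  intros Hx Hh. unfold takagi_quot. rewrite Rabs_Ropp.
  replace (1 - x + h) with (1 - (x - h)) by ring.
  rewrite !takagi_sym by lra. replace (x + - h) with (x - h) by ring.
  field. split. unfold log2. rewrite ln_Rinv. 2: apply Rabs_pos_lt; lra.
  rewrite Rabs_right by lra. assert (ln h < 0). rewrite <- ln_1. apply ln_increasing; lra.
  pose proof ln2_pos. intro. unfold Rdiv in H1. assert (- ln h * / ln 2 > 0).
  apply Rmult_lt_0_compat. lra. apply Rinv_0_lt_compat; lra. lra. lra.
Qed.


Lemma nat_above t : exists k:nat, t < INR k.
Proof.
  destruct (archimed t) as [H1 _]. destruct (Z_le_gt_dec 0 (up t)).
  - exists (Z.to_nat (up t)). rewrite INR_IZR_INZ, Z2Nat.id by lia. lra.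
  - exists 0%nat. simpl. assert (up t < 0)%Z by lia. apply IZR_lt in H. lra.
Qed.

Lemma seq_eps (u : nat -> R) (l : R) : is_lim_seq u l ->
  forall e, 0 < e -> exists N, forall n, (N <= n)%nat -> Rabs (u n - l) < e.
Proof.
  intros Hl e He. apply is_lim_seq_spec in Hl. destruct (Hl (mkposreal e He)) as [N HN].
  exists N. auto.
Qed.

Lemma eps_seq (u : nat -> R) (l : R) :
  (forall e, 0 < e -> exists N, forall n, (N <= n)%nat -> Rabs (u n - l) < e) -> is_lim_seq u l.
Proof.
  intros H. apply is_lim_seq_spec. intros [e He]. destruct (H e He) as [N HN]. exists N. auto.
Qed.

Section S.
Variables (x : R) (eps a b : nat -> nat).
Hypothesis H : Hyp x eps a b.

Lemma find_n t : INR (b 0) <= t -> exists n, INR (b n) <= t < INR (b (S n)).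
Proof.
  intros Ht. destruct (nat_above t) as [k Hk].
  assert (Hk' : t < INR (b k)).
  { pose proof (b_ge x eps a b H k). apply le_INR in H0. rewrite S_INR in H0. lra. }
  clear Hk. induction k.
  - lra.
  - destruct (Rlt_dec t (INR (b k))). auto. exists k. lra.
Qed.

Lemma right_lim (c : R) : is_lim_seq (DA eps) c ->
  is_lim_seq (fun n => INR (b (S n)) / INR (b n)) 1 ->
  forall e, 0 < e -> exists d, 0 < d /\ forall h, 0 < h < d -> Rabs (takagi_quot x h - c) < e.
Proof.
  intros Hc Hr e He.
  destruct (seq_eps _ _ Hr (e/12) ltac:(lra)) as [N1 HN1].
  destruct (seq_eps _ _ Hc (e/2) ltac:(lra)) as [N3 HN3].
  destruct (nat_above (36/e)) as [N2 HN2].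
  set (N0 := (N1 + N2 + N3 + 1)%nat).
  exists (/ 2^(b N0)). split. apply Rinv_0_lt_compat, pow2_pos.
  intros h [Hh0 Hh1].
  set (l := log2 (/ h)).
  assert (Hl0 : INR (b N0) < l) by (apply log2_b; auto).
  assert (Hb0 : INR (b 0) <= l).
  { pose proof (p_mono_le b (b_incr x eps a b H) 0 N0 ltac:(lia)). apply le_INR in H0. lra. }
  destruct (find_n l Hb0) as [n [Hn1 Hn2]].
  assert (HnN0 : (N0 <= n)%nat).
  { destruct (le_lt_dec N0 n). auto. exfalso.
    pose proof (p_mono_le b (b_incr x eps a b H) (S n) N0 ltac:(lia)). apply le_INR in H0. lra. }
  set (p := b n) in *. set (N := b (S n)) in *.
  pose proof (b_ge x eps a b H n) as Hpn. fold p in Hpn.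
  pose proof (b_incr x eps a b H n) as HpN. fold p N in HpN.
  destruct p as [|J] eqn:Ep. lia.
  assert (He0 : eps (S J) = 0%nat). { rewrite <- Ep. apply (eps_b x eps a b H). }
  assert (Hhp : h <= / 2^(S J)).
  { destruct (Rle_dec h (/2^(S J))). auto. exfalso.
    pose proof (log2_d h (S J) ltac:(lra)). fold l in H0. lra. }
  assert (HhN : / 2^N < h).
  { destruct (Rlt_dec (/2^N) h). auto. exfalso.
    pose proof (log2_a h N Hh0 ltac:(lra)). fold l in H0. lra. }
  assert (HLJ : L eps (S J) = L eps J).
  { rewrite L_S, He0. simpl INR. unfold Rdiv. ring. }
  pose proof (L_bounds x eps a b H (S J)) as HxS. pose proof (L_bounds x eps a b H J) as HxJ.
  assert (Hin : inlev eps J (x + h)).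
  { unfold inlev. assert (/2^J = 2 * /2^(S J)) by (simpl; field; apply pow_nonzero; lra).
    lra. }
  pose proof (main_bound x eps a b H J N (x+h) Hin ltac:(lia)) as HM.
  replace (x + h - x) with h in HM by ring. rewrite (Rabs_right h) in HM by lra.
  assert (HJ1 : (1 <= J)%nat) by lia.
  assert (HJpos : 0 < INR J) by (apply lt_0_INR; lia).
  assert (HM' : Rabs (takagi (x + h) - takagi x - h * Dsum eps J) <= (INR (N - J) + 1) * Rabs h).
  { rewrite (Rabs_right h) by lra. lra. }
  assert (HQ := Qbound x h (Dsum eps J) (INR J) (INR (N - J) + 1) (INR (N - J)) ltac:(lra) HJpos).
  rewrite Rabs_right in HQ by lra. fold l in HQ.
  rewrite minus_INR in HQ by lia.
  assert (Hlp : INR (S J) <= l) by exact Hn1. rewrite S_INR in Hlp.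
  specialize (HQ ltac:(split; lra) ltac:(apply le_INR in HpN; rewrite S_INR in HpN; lra)
    (Dsum_abs eps J (fun i Hi => eps_le1 x eps a b H i Hi))).
  rewrite minus_INR in HM' by lia. rewrite (Rabs_right h) in HM' by lra. specialize (HQ HM').
  pose proof (HN3 J ltac:(lia)) as HD. unfold DA in HD.
  pose proof (HN1 n ltac:(lia)) as HR. cbv beta in HR. fold N in HR. change (b n) with p in HR. rewrite Ep in HR.
  set (P' := INR (S J)) in *. set (N' := INR N) in *.
  assert (HP'2 : 2 <= P') by (unfold P'; replace 2 with (INR 2) by (simpl; ring); apply le_INR; lia).
  assert (HP'n : INR N2 < P').
  { unfold P'. apply lt_INR. lia. }
  assert (HeP : 36 < e * P').
  { apply (Rmult_lt_compat_l e) in HN2; auto. replace (e * (36/e)) with 36 in HN2 by (field; lra).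
    nra. }
  assert (HP'J : P' = INR J + 1) by (unfold P'; apply S_INR).
  assert (HR' : N' - P' < e / 12 * P').
  { apply Rabs_lt_between in HR. destruct HR as [_ HR].
    assert (N' / P' < 1 + e/12) by lra.
    apply (Rmult_lt_compat_r P') in H0; [|lra]. unfold Rdiv in H0.
    rewrite Rmult_assoc, Rinv_l in H0 by lra. lra. }
  assert (HB : (N' - INR J + 1 + (N' - INR J)) / INR J < e / 2).
  { apply (Rmult_lt_reg_r (INR J)); auto. unfold Rdiv. rewrite Rmult_assoc, Rinv_l by lra.
    nra. }
  replace (takagi_quot x h - c) with ((takagi_quot x h - Dsum eps J / INR J) + (Dsum eps J / INR J - c)) by ring.
  eapply Rle_lt_trans. apply Rabs_triang. lra.
Qed.

End S.


Lemma INR_lt_pow k : INR k < 2^k.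
Proof.
  induction k. simpl; lra. rewrite S_INR. simpl.
  assert (1 <= 2^k). { clear IHk. induction k. simpl; lra. simpl. lra. } lra.
Qed.

Lemma small_pow d : 0 < d -> exists M:nat, forall m, (M <= m)%nat -> / 2^m < d.
Proof.
  intros Hd. destruct (nat_above (/d)) as [M HM]. exists M. intros m Hm.
  pose proof (INR_lt_pow m). apply le_INR in Hm.
  assert (/d < 2^m) by lra. pose proof (pow2_pos m).
  rewrite <- (Rinv_inv d). apply Rinv_lt_contravar. apply Rmult_lt_0_compat; auto.
  apply Rinv_0_lt_compat; auto. auto.
Qed.

Lemma psi_sym_int (K:Z) t : psi (IZR K + t) = psi (IZR K - t).
Proof.
  rewrite Rplus_comm, psi_shift. replace (IZR K - t) with (- t + IZR K) by ring.
  rewrite psi_shift, psi_opp. reflexivity.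
Qed.

Lemma psi_sym_half (K:Z) t : psi (IZR K + /2 + t) = psi (IZR K + /2 - t).
Proof.
  rewrite <- (psi_opp (IZR K + /2 - t)).
  replace (IZR K + /2 + t) with (- (IZR K + /2 - t) + IZR (2*K+1)).
  apply psi_shift. rewrite plus_IZR, mult_IZR. simpl. lra.
Qed.

Section S.
Variables (x : R) (eps a b : nat -> nat).
Hypothesis H : Hyp x eps a b.

Definition limQ (Lq : R) := forall e, 0 < e -> exists d, 0 < d /\
  forall h, Rabs h < d -> h <> 0 -> Rabs (takagi_quot x h - Lq) < e.

Lemma step1 Lq : limQ Lq -> is_lim_seq (DA eps) Lq.
Proof.
  intros Hl. apply eps_seq. intros e He.
  destruct (Hl (e/2) ltac:(lra)) as [d [Hd Hd']].
  destruct (small_pow d Hd) as [M1 HM1].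
  destruct (nat_above (6/e)) as [M2 HM2].
  exists (M1 + M2 + 1)%nat. intros m Hm.
  pose proof (L_bounds x eps a b H m) as HxL.
  pose proof (pow2_pos m) as Hpm.
  assert (Hhalf : / 2^(S m) = /2 * /2^m) by (simpl; field; lra).
  assert (Hpos : 0 < /2^m) by (apply Rinv_0_lt_compat; auto).
  assert (exists y, inlev eps m y /\ / 2^(S m) <= Rabs (y - x) <= / 2^m /\ y <> x) as [y [Hy [Hyx Hne]]].
  { destruct (Rle_dec (/2^(S m)) (x - L eps m)).
    - exists (L eps m). split. split; lra. split. rewrite Rabs_left by lra. lra. lra.
    - exists (L eps m + /2^m). split. split; lra. split. rewrite Rabs_right by lra. lra. lra. }
  set (h := y - x) in *.
  assert (Hh0 : h <> 0) by (unfold h; lra).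
  pose proof (main_bound x eps a b H m (S m) y Hy ltac:(lia)) as HM.
  fold h in HM. replace (S m - m)%nat with 1%nat in HM by lia. simpl INR in HM.
  replace y with (x + h) in HM by (unfold h; ring).
  assert (HM' : Rabs (takagi (x + h) - takagi x - h * Dsum eps m) <= 2 * Rabs h) by lra.
  assert (Hmpos : 0 < INR m) by (apply lt_0_INR; lia).
  assert (Hh0' : 0 < Rabs h) by lra.
  pose proof (log2_a (Rabs h) m Hh0' ltac:(lra)).
  pose proof (log2_c (Rabs h) (S m) ltac:(lra)). rewrite S_INR in H1.
  pose proof (Qbound x h (Dsum eps m) (INR m) 2 1 Hh0 Hmpos ltac:(lra) ltac:(lra)
     (Dsum_abs eps m (fun i Hi => eps_le1 x eps a b H i Hi)) HM') as HQ.
  assert (Hsm : / 2^m < d) by (apply HM1; lia).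
  pose proof (Hd' h ltac:(lra) Hh0) as HL.
  assert (HmM : INR M2 < INR m) by (apply lt_INR; lia).
  assert ((2 + 1) / INR m < e/2).
  { apply (Rmult_lt_reg_r (INR m)); auto. unfold Rdiv. rewrite Rmult_assoc, Rinv_l by lra.
    apply (Rmult_lt_compat_l e) in HM2; auto. replace (e * (6/e)) with 6 in HM2 by (field; lra).
    nra. }
  unfold DA. replace (Dsum eps m / INR m - Lq) with
    (-(takagi_quot x h - Dsum eps m / INR m) + (takagi_quot x h - Lq)) by ring.
  eapply Rle_lt_trans. apply Rabs_triang. rewrite Rabs_Ropp. lra.
Qed.

Lemma L_run p i : (forall j, (p < j <= p + i)%nat -> eps j = 1%nat) ->
  L eps (p + i) = L eps p + / 2^p - / 2^(p+i).
Proof.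
  intros Hr. induction i.
  - rewrite Nat.add_0_r. ring.
  - replace (p + S i)%nat with (S (p+i)) by lia. rewrite L_S, IHi by (intros; apply Hr; lia).
    rewrite Hr by lia. simpl INR. pose proof (pow2_pos (p+i)).
    replace (2^(S (p+i))) with (2 * 2^(p+i)) by reflexivity. field. split; [lra | apply pow_nonzero; lra].
Qed.

Lemma run_exact J : eps (S J) = 0%nat ->
  let d := L eps (S J) + / 2^(S J) - x in
  takagi (x + 2 * d) - takagi x = (2 * d) * Dsum eps J.
Proof.
  intros He0 d.
  pose proof (L_bounds x eps a b H (S J)) as HxS.
  assert (HLJ : L eps (S J) = L eps J) by (rewrite L_S, He0; simpl INR; unfold Rdiv; ring).
  assert (Hd : 0 < d < / 2^(S J)) by (unfold d; lra).
  replace (2 * d) with (x + 2 * d - x) at 2 by ring.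
  apply (exact_diff x eps a b H J).
  - unfold inlev. assert (/2^J = 2 * /2^(S J)) by (simpl; field; apply pow_nonzero; lra).
    unfold d. lra.
  - intros n Hn. set (P := L eps (S J) + / 2^(S J)).
    assert (Ey : 2^n * (x + 2*d) = 2^n * P + 2^n * d) by (unfold d, P; ring).
    assert (Ex : 2^n * x = 2^n * P - 2^n * d) by (unfold d, P; ring).
    rewrite Ey, Ex. destruct (Nat.eq_dec n J) as [->|Hne].
    + destruct (L_mult eps J J ltac:(lia)) as [M HM].
      assert (2^J * P = IZR (Z.of_nat M) + /2).
      { unfold P. rewrite HLJ, HM, <- INR_IZR_INZ. simpl. field. apply pow_nonzero; lra. }
      rewrite H0. apply psi_sym_half.
    + assert (Hm : mult n P).
      { unfold P. replace (/ 2^(S J)) with (INR 1 / 2^(S J)) by (simpl; field; apply pow_nonzero; lra).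
        apply mult_plus. lia. apply L_mult; auto. lia. }
      destruct Hm as [M HM].
      assert (2^n * P = IZR (Z.of_nat M)).
      { rewrite HM, <- INR_IZR_INZ. field. apply pow_nonzero; lra. }
      rewrite H0. apply psi_sym_int.
Qed.

Lemma step2 Lq : limQ Lq -> Lq <> 0 -> is_lim_seq (DA eps) Lq ->
  is_lim_seq (fun n => INR (b (S n)) / INR (b n)) 1.
Proof.
  intros Hl HL0 HD. apply eps_seq. intros e He.
  set (lam := Rabs Lq). assert (Hlam : 0 < lam) by (apply Rabs_pos_lt; auto).
  set (eta := Rmin (lam/2) (e * lam / 8)).
  assert (Heta : 0 < eta) by (apply Rmin_pos; nra).
  assert (Heta1 : eta <= lam/2) by apply Rmin_l.
  assert (Heta2 : eta <= e * lam / 8) by apply Rmin_r.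
  destruct (Hl eta Heta) as [d [Hd Hd']].
  destruct (small_pow d Hd) as [M1 HM1].
  destruct (seq_eps _ _ HD eta Heta) as [N3 HN3].
  destruct (nat_above (2/e)) as [M2 HM2].
  exists (M1 + M2 + N3 + 1)%nat. intros n Hn.
  pose proof (b_ge x eps a b H n) as Hbn. pose proof (b_incr x eps a b H n) as HbS.
  destruct (b n) as [|J] eqn:EJ. lia.
  destruct (b (S n)) as [|q] eqn:Eq. lia.
  assert (He0 : eps (S J) = 0%nat) by (rewrite <- EJ; apply (eps_b x eps a b H)).
  assert (Hq0 : eps (S q) = 0%nat) by (rewrite <- Eq; apply (eps_b x eps a b H)).
  assert (Hrun : forall j, (S J < j <= S J + (q - S J))%nat -> eps j = 1%nat).
  { intros j Hj. apply (eps_between x eps a b H n). rewrite EJ, Eq. lia. }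
  pose proof (L_run (S J) (q - S J) Hrun) as HLq. replace (S J + (q - S J))%nat with q in HLq by lia.
  assert (HLSq : L eps (S q) = L eps q) by (rewrite L_S, Hq0; simpl INR; unfold Rdiv; ring).
  pose proof (L_bounds x eps a b H (S q)) as HxSq.
  set (dd := L eps (S J) + / 2^(S J) - x).
  assert (Hpq : / 2^(S q) = /2 * /2^q) by (simpl; field; apply pow_nonzero; lra).
  assert (Hdd : / 2^(S q) < dd < / 2^q) by (unfold dd; lra).
  set (h := 2 * dd).
  assert (Hh0 : 0 < h) by (unfold h; pose proof (pow2_pos (S q)); assert (0 < / 2^(S q)) by (apply Rinv_0_lt_compat; lra); lra).
  assert (Hq1 : (1 <= q)%nat) by lia.
  assert (Hh1 : / 2^q < h) by (unfold h; lra).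
  assert (Hh2 : h < / 2^(q-1)).
  { replace (/ 2^(q-1)) with (2 * / 2^q). unfold h; lra.
    replace q with (S (q-1)) at 1 by lia. simpl. field. apply pow_nonzero; lra. }
  set (l := log2 (/ h)).
  assert (Hl1 : l < INR q) by (apply log2_d; auto).
  assert (Hl2 : INR (q-1) < l) by (apply log2_b; auto).
  rewrite minus_INR in Hl2 by lia. simpl INR in Hl2.
  pose proof (run_exact J He0) as HE. cbv zeta in HE. fold dd in HE. fold h in HE.
  assert (HJ1 : (1 <= J)%nat) by lia.
  assert (HJpos : 0 < INR J) by (apply lt_0_INR; lia).
  assert (HJq : INR J <= INR (q - 1)) by (apply le_INR; lia). rewrite minus_INR in HJq by lia. simpl INR in HJq.
  assert (Hlpos : 0 < l) by lra.
  assert (HQv : takagi_quot x h = Dsum eps J / l).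
  { unfold takagi_quot. rewrite HE. rewrite Rabs_right by lra. fold l. field. lra. }
  assert (Hhd : Rabs h < d).
  { rewrite Rabs_right by lra. assert (/ 2^(q-1) < d) by (apply HM1; lia). lra. }
  pose proof (Hd' h Hhd ltac:(lra)) as Hv. rewrite HQv in Hv.
  pose proof (HN3 J ltac:(lia)) as Hu. unfold DA in Hu.
  set (u := Dsum eps J / INR J) in *. set (v := Dsum eps J / l) in *.
  assert (Huv : u * INR J = v * l) by (unfold u, v; field; lra).
  assert (Hv0 : lam / 2 <= Rabs v).
  { unfold lam in *. pose proof (Rabs_triang_inv Lq (Lq - v)).
    replace (Lq - (Lq - v)) with v in H0 by ring. rewrite Rabs_minus_sym in Hv. lra. }
  assert (Hlj : Rabs (l - INR J) * Rabs v = INR J * Rabs (u - v)).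
  { rewrite <- Rabs_mult. rewrite <- (Rabs_right (INR J)) at 2 by lra. rewrite <- Rabs_mult.
    f_equal. replace ((l - INR J) * v) with (v * l - v * INR J) by ring. rewrite <- Huv. ring. }
  assert (Huv' : Rabs (u - v) < 2 * eta).
  { replace (u - v) with ((u - Lq) - (v - Lq)) by ring.
    eapply Rle_lt_trans. apply Rabs_triang. rewrite Rabs_Ropp. lra. }
  assert (Hlj' : Rabs (l - INR J) < e * INR J / 2).
  { destruct (Rlt_dec (Rabs (l - INR J)) (e * INR J / 2)). auto. exfalso.
    assert (e * INR J / 2 * (lam / 2) <= Rabs (l - INR J) * Rabs v).
    { apply Rmult_le_compat; try lra. nra. }
    assert (INR J * Rabs (u - v) < INR J * (2 * eta)) by (apply Rmult_lt_compat_l; lra).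
    nra. }
  assert (HeJ : 2 < e * INR J).
  { assert (INR M2 < INR J) by (apply lt_INR; lia).
    apply (Rmult_lt_compat_l e) in HM2; auto. replace (e * (2/e)) with 2 in HM2 by (field; lra). nra. }
  rewrite !S_INR.
  assert (Hgoal : Rabs (INR q + 1 - (INR J + 1)) < e * (INR J + 1)).
  { replace (INR q + 1 - (INR J + 1)) with ((l - INR J) + (INR q - l)) by ring.
    eapply Rle_lt_trans. apply Rabs_triang. rewrite (Rabs_right (INR q - l)) by lra. lra. }
  replace ((INR q + 1) / (INR J + 1) - 1) with ((INR q + 1 - (INR J + 1)) / (INR J + 1)) by (field; lra).
  unfold Rdiv. rewrite Rabs_mult, Rabs_inv, (Rabs_right (INR J + 1)) by lra.
  apply (Rmult_lt_reg_r (INR J + 1)). lra. rewrite Rmult_assoc, Rinv_l by lra. lra.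
Qed.

End S.


Section S.
Variables (x : R) (eps a b : nat -> nat).
Hypothesis H : Hyp x eps a b.

Lemma Dsum_run p i : (forall j, (p < j <= p + i)%nat -> eps j = 1%nat) ->
  Dsum eps (p + i) = Dsum eps p - INR i.
Proof.
  intros Hr. induction i.
  - rewrite Nat.add_0_r. simpl. ring.
  - replace (p + S i)%nat with (S (p+i)) by lia. simpl Dsum. rewrite IHi by (intros; apply Hr; lia).
    rewrite Hr by lia. rewrite (S_INR i). change (INR 1) with 1. lra.
Qed.

Lemma density_ratio (c:R) : is_lim_seq (DA eps) c -> -1 < c ->
  is_lim_seq (fun n => INR (b (S n)) / INR (b n)) 1.
Proof.
  intros HD Hc. apply eps_seq. intros e He.
  set (k := 1 + c). assert (Hk : 0 < k) by (unfold k; lra).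
  set (eta := Rmin (k/2) (e * k / 8)).
  assert (Heta : 0 < eta) by (apply Rmin_pos; nra).
  assert (Heta1 : eta <= k/2) by apply Rmin_l.
  assert (Heta2 : eta <= e * k / 8) by apply Rmin_r.
  destruct (seq_eps _ _ HD eta Heta) as [N3 HN3].
  destruct (nat_above (2/e)) as [M2 HM2].
  exists (M2 + N3 + 1)%nat. intros n Hn.
  pose proof (b_ge x eps a b H n) as Hbn. pose proof (b_incr x eps a b H n) as HbS.
  destruct (b (S n)) as [|q] eqn:Eq. lia.
  set (p := b n) in *.
  assert (He0 : eps p = 0%nat) by (apply (eps_b x eps a b H)).
  assert (Hrun : forall j, (p < j <= p + (q - p))%nat -> eps j = 1%nat).
  { intros j Hj. apply (eps_between x eps a b H n). rewrite Eq. fold p. lia. }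
  pose proof (Dsum_run p (q - p) Hrun) as HDq. replace (p + (q - p))%nat with q in HDq by lia.
  rewrite minus_INR in HDq by lia.
  pose proof (HN3 p ltac:(lia)) as Hu. pose proof (HN3 q ltac:(lia)) as Hw. unfold DA in Hu, Hw.
  assert (Hp0 : 0 < INR p) by (apply lt_0_INR; lia).
  assert (Hq0 : INR p <= INR q) by (apply le_INR; lia).
  set (u := Dsum eps p / INR p) in *. set (w := Dsum eps q / INR q) in *.
  set (g := INR q - INR p) in *.
  assert (Hg0 : 0 <= g) by (unfold g; lra).
  assert (Hrel : g * (w + 1) = INR p * (u - w)).
  { unfold u, w. rewrite HDq. unfold g. field. lra. }
  assert (Hw1 : k / 2 <= w + 1).
  { apply Rabs_lt_between in Hw. unfold k in *. lra. }
  assert (Huw : Rabs (u - w) < 2 * eta).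
  { replace (u - w) with ((u - c) - (w - c)) by ring.
    eapply Rle_lt_trans. apply Rabs_triang. rewrite Rabs_Ropp. lra. }
  assert (Hg : g < e * INR p / 2).
  { destruct (Rlt_dec g (e * INR p / 2)). auto. exfalso.
    assert (e * INR p / 2 * (k/2) <= g * (w + 1)) by (apply Rmult_le_compat; nra).
    assert (INR p * (u - w) <= INR p * Rabs (u - w)) by (apply Rmult_le_compat_l; [lra| apply Rle_abs]).
    assert (INR p * Rabs (u - w) < INR p * (2 * eta)) by (apply Rmult_lt_compat_l; lra).
    nra. }
  assert (HeP : 2 < e * INR p).
  { assert (INR M2 < INR p) by (apply lt_INR; lia).
    apply (Rmult_lt_compat_l e) in HM2; auto. replace (e * (2/e)) with 2 in HM2 by (field; lra). nra. }
  rewrite S_INR.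
  replace ((INR q + 1) / INR p - 1) with ((g + 1) / INR p) by (unfold g; field; lra).
  rewrite Rabs_right. 2: { apply Rle_ge, Rdiv_le_0_compat; lra. }
  apply (Rmult_lt_reg_r (INR p)); auto. unfold Rdiv. rewrite Rmult_assoc, Rinv_l by lra. lra.
Qed.

Lemma DA_refl (c:R) : is_lim_seq (DA eps) c -> is_lim_seq (DA (refl eps)) (- c).
Proof.
  intros Hc. apply is_lim_seq_opp in Hc. simpl in Hc.
  eapply is_lim_seq_ext. 2: exact Hc. intros n. unfold DA.
  rewrite Dsum_refl. unfold Rdiv. ring. apply (eps_le1 x eps a b H).
Qed.

Lemma quot_refl_all h : Rabs h < Rmin x (1 - x) -> h <> 0 ->
  takagi_quot (1 - x) h = - takagi_quot x (- h).
Proof.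
  intros Hh Hn. destruct H as [Hx _].
  assert (Rabs h < x) by (pose proof (Rmin_l x (1-x)); lra).
  assert (Rabs h < 1 - x) by (pose proof (Rmin_r x (1-x)); lra).
  destruct (Rlt_le_dec 0 h).
  - apply quot_refl. auto. rewrite Rabs_right in H0 by lra. lra.
  - rewrite Rabs_left in H1 by lra.
    pose proof (quot_refl (1 - x) (- h) ltac:(lra) ltac:(lra)).
    replace (1 - (1 - x)) with x in H2 by ring. rewrite Ropp_involutive in H2. lra.
Qed.

Lemma DA_bound (L:R) : is_lim_seq (DA eps) L -> -1 <= L <= 1.
Proof.
  intros HL. apply is_lim_seq_abs in HL.
  assert (Rbar_le (Rabs L) 1).
  { apply (is_lim_seq_le (fun n => Rabs (DA eps n)) (fun _ => 1) _ _ ).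
    - intros n. unfold DA. destruct n. simpl. unfold Rdiv. rewrite Rmult_0_l, Rabs_R0. lra.
      pose proof (Dsum_abs eps (S n) (fun i Hi => eps_le1 x eps a b H i Hi)).
      assert (0 < INR (S n)) by (apply lt_0_INR; lia).
      unfold Rdiv. rewrite Rabs_mult, Rabs_inv, (Rabs_right (INR (S n))) by lra.
      apply (Rmult_le_reg_r (INR (S n))); auto. rewrite Rmult_assoc, Rinv_l by lra. lra.
    - exact HL.
    - apply is_lim_seq_const. }
  simpl in H0. apply Rabs_le_between in H0. lra.
Qed.

End S.

Lemma if_dir x eps a b d : Hyp x eps a b -> density_regular_with eps a b d ->
  is_lim (takagi_quot x) 0 ((1 - d) - d).
Proof.
  intros H [Hd Hcase].
  pose proof (Hyp_refl x eps a b H) as H'.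
  pose proof (dens_to_DA eps d Hd) as HDA.
  pose proof (DA_refl x eps a b H _ HDA) as HDA'.
  assert (Hb : is_lim_seq (fun n => INR (b (S n)) / INR (b n)) 1).
  { destruct Hcase as [[_ H1]|[[-> Hr]|[-> Hr]]].
    - apply (density_ratio x eps a b H (1 - 2*d)); auto. lra.
    - apply (density_ratio x eps a b H (1 - 2*0)); auto. lra.
    - exact Hr. }
  assert (Ha : is_lim_seq (fun n => INR (a (S n)) / INR (a n)) 1).
  { destruct Hcase as [[H1 _]|[[-> Hr]|[-> Hr]]].
    - apply (density_ratio (1-x) (refl eps) b a H' (-(1 - 2*d))); auto. lra.
    - exact Hr.
    - apply (density_ratio (1-x) (refl eps) b a H' (-(1 - 2*1))); auto. lra. }
  pose proof (right_lim x eps a b H _ HDA Hb) as HR.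
  pose proof (right_lim (1-x) (refl eps) b a H' _ HDA' Ha) as HL.
  apply lim_eps. intros e He.
  destruct (HR e He) as [d1 [Hd1 Hd1']]. destruct (HL e He) as [d2 [Hd2 Hd2']].
  pose proof (proj1 H) as Hx.
  exists (Rmin (Rmin d1 d2) (Rmin x (1 - x))). split.
  { apply Rmin_pos; apply Rmin_pos; lra. }
  intros h Hh Hn.
  pose proof (Rmin_l (Rmin d1 d2) (Rmin x (1 - x))). pose proof (Rmin_r (Rmin d1 d2) (Rmin x (1 - x))).
  pose proof (Rmin_l d1 d2). pose proof (Rmin_r d1 d2).
  replace (1 - d - d) with (1 - 2 * d) by ring.
  destruct (Rlt_le_dec 0 h).
  - rewrite Rabs_right in Hh by lra. apply Hd1'. lra.
  - assert (Hq : takagi_quot (1 - x) (- h) = - takagi_quot x (- - h)).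
    { apply (quot_refl_all x eps a b H). rewrite Rabs_Ropp. lra. lra. }
    rewrite Ropp_involutive in Hq.
    rewrite Rabs_left in Hh by lra.
    pose proof (Hd2' (-h) ltac:(lra)) as Hc.
    replace (takagi_quot x h - (1 - 2 * d)) with (- (takagi_quot (1 - x) (-h) - (- (1 - 2 * d)))) by (rewrite Hq; ring).
    rewrite Rabs_Ropp. exact Hc.
Qed.


Lemma limQ_refl x eps a b (L:R) : Hyp x eps a b -> limQ x L -> limQ (1 - x) (- L).
Proof.
  intros H Hl e He. destruct (Hl e He) as [d0 [Hd0 Hd0']].
  pose proof (proj1 H) as Hx.
  exists (Rmin d0 (Rmin x (1 - x))). split. apply Rmin_pos; [lra| apply Rmin_pos; lra].
  intros h Hh Hn. pose proof (Rmin_l d0 (Rmin x (1 - x))). pose proof (Rmin_r d0 (Rmin x (1 - x))).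
  rewrite (quot_refl_all x eps a b H h) by (auto; lra).
  replace (- takagi_quot x (- h) - - L) with (- (takagi_quot x (- h) - L)) by ring.
  rewrite Rabs_Ropp. apply Hd0'. rewrite Rabs_Ropp. lra. lra.
Qed.

Lemma only_if x eps a b (L:R) : Hyp x eps a b -> is_lim (takagi_quot x) 0 L ->
  density_regular eps a b.
Proof.
  intros H Hlim. pose proof (proj1 (lim_eps (takagi_quot x) L) Hlim) as Hlim2.
  assert (HQ : limQ x L) by exact Hlim2.
  pose proof (step1 x eps a b H L HQ) as HDA.
  pose proof (DA_bound x eps a b H L HDA) as HLb.
  exists ((1 - L)/2). split. apply DA_to_dens; auto.
  destruct (Req_dec L (-1)) as [E1|E1].
  - right; right. split. rewrite E1; field.
    apply (step2 x eps a b H L HQ). lra. auto.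
  - destruct (Req_dec L 1) as [E2|E2].
    + right; left. split. rewrite E2; field.
      pose proof (Hyp_refl x eps a b H) as H'.
      apply (step2 (1 - x) (refl eps) b a H' (- L)).
      apply (limQ_refl x eps a b L H HQ). lra.
      apply (DA_refl x eps a b H L HDA).
    + left. lra.
Qed.

Theorem theorem2 (x : R) (eps a b : nat -> nat) :
  0 < x < 1 -> ~ dyadic x ->
  binary_expansion x eps ->
  power_sum_repr x a -> power_sum_repr (1 - x) b ->
  ((exists L : R, is_lim (takagi_quot x) 0 L) <-> density_regular eps a b) /\
  (forall d : R, density_regular_with eps a b d ->
     is_lim (takagi_quot x) 0 ((1 - d) - d)).
Proof.
  intros Hx Hd He Ha Hb.
  assert (H : Hyp x eps a b) by exact (conj Hx (conj Hd (conj He (conj Ha Hb)))).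
  split. split.
  - intros [L HL]. apply (only_if x eps a b L H HL).
  - intros [d Hd']. exists ((1 - d) - d). apply (if_dir x eps a b d H Hd').
  - intros d Hd'. apply (if_dir x eps a b d H Hd').
Qed.
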